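(* Let $n\ge2$, $\beta_i>0$, $\nu_i\in[0,1]$ and $\rho_i\in[0,1]$ for $i\in\{1,\dots,n\}$, and consider the well-mixed resource–consumption system \[ \dot x=(1-x)x-x\sum_{i=1}^n y_i,\qquad \dot y_i=\beta_i\Big((1-\nu_i)(x-\rho_i)+\frac{\nu_i}{n-1}\sum_{j\ne i}(y_j-y_i)\Big),\quad i=1,\dots,n . \] Assume that it is not the case that all $\nu_i=1$, not the case that all $\nu_i=0$, not the case that all $\rho_i=1$, and not the case that all $\rho_i=0$. Then, provided at most one of $\nu_1,\dots,\nu_n$ equals $0$ (i.e. at least $n-1$ consumers have $\nu_i>0$), the system has a unique equilibrium $(\bar x,\bar y_1,\dots,\bar y_n)$ satisfying $\bar x=1-\sum_{i=1}^n\bar y_i$; and such an equilibrium exists (uniquely) only if at least $n-1$ of the $\nu_i$ are positive.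
   Context: An equilibrium is a point $(\bar x,\bar y_1,\dots,\bar y_n)\in\mathbb{R}^{n+1}$ at which all right-hand sides vanish. *)

(* Defs.v *)
From HB Require Import structures.
From mathcomp Require Import all_boot all_order all_algebra.
From mathcomp Require Import reals.
Set Implicit Arguments. Unset Strict Implicit. Unset Printing Implicit Defensive.
Import Order.TTheory GRing.Theory Num.Theory.
Local Open Scope ring_scope.

Section RC.
Variables (R : realType) (n : nat) (beta nu rho : 'I_n -> R).

Definition rhs_x (x : R) (y : 'I_n -> R) : R :=
  (1 - x) * x - x * \sum_(i < n) y i.

Definition rhs_y (x : R) (y : 'I_n -> R) (i : 'I_n) : R :=
  beta i * ((1 - nu i) * (x - rho i)
            + nu i / (n.-1)%:R * \sum_(j < n | j != i) (y j - y i)).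

Definition is_equilibrium (x : R) (y : 'I_n -> R) : Prop :=
  rhs_x x y = 0 /\ forall i, rhs_y x y i = 0.

Definition interior_equilibrium (x : R) (y : 'I_n -> R) : Prop :=
  is_equilibrium x y /\ x = 1 - \sum_(i < n) y i.

Definition unique_interior_equilibrium : Prop :=
  (exists x y, interior_equilibrium x y) /\
  (forall x y x' y', interior_equilibrium x y -> interior_equilibrium x' y' ->
     x = x' /\ forall i, y i = y' i).
End RC.

(* Main.v *)
Require Import Defs.
From HB Require Import structures.
From mathcomp Require Import all_boot all_order all_algebra.
From mathcomp Require Import reals.
From mathcomp Require Import ring lra.
Import Order.TTheory GRing.Theory Num.Theory.
Local Open Scope ring_scope.
Set Implicit Arguments. Unset Strict Implicit.

Section Aux.
Variables (R : realType) (n : nat) (beta nu rho : 'I_n -> R).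

Definition cc : R := (n.-1)%:R.
Definition Tf (i : 'I_n) (S v : R) : R :=
  (1 - nu i) * (1 - S - rho i) + nu i / cc * (S - n%:R * v).
Definition aa (i : 'I_n) : R := cc * (1 - nu i) / nu i.
Definition ff (i : 'I_n) (S : R) : R := (S + aa i * (1 - S - rho i)) / n%:R.

Lemma rhs_yE (y : 'I_n -> R) i :
  rhs_y beta nu rho (1 - \sum_(j < n) y j) y i = beta i * Tf i (\sum_(j < n) y j) (y i).
Proof.
rewrite /rhs_y /Tf; congr (_ * (_ + _ * _)).
have H : \sum_(j < n) (y j - y i) = \sum_(j < n) y j - n%:R * y i.
  by rewrite sumrB sumr_const card_ord mulr_natl.
by rewrite -H [RHS](bigD1 i) //= subrr add0r.
Qed.

Lemma TfE i S v : (1 < n)%N -> nu i != 0 ->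
  Tf i S v = nu i * n%:R / cc * (ff i S - v).
Proof.
move=> hn hnu.
have hc : cc != 0 by rewrite /cc pnatr_eq0 -lt0n; case: n hn => [|[|m]].
have hn0 : (n%:R : R) != 0 by rewrite pnatr_eq0 -lt0n; case: n hn.
rewrite /Tf /ff /aa; field.
by rewrite hc hn0 hnu.
Qed.

Lemma Tf0 i S v : (1 < n)%N -> nu i != 0 -> (Tf i S v = 0 <-> v = ff i S).
Proof.
move=> hn hnu; rewrite TfE //.
have hc : cc != 0 by rewrite /cc pnatr_eq0 -lt0n; case: n hn => [|[|m]].
have hn0 : (n%:R : R) != 0 by rewrite pnatr_eq0 -lt0n; case: n hn.
split.
  move/eqP; rewrite mulf_eq0 !mulf_eq0 invr_eq0 (negbTE hc) (negbTE hnu) (negbTE hn0) /=.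
  by rewrite subr_eq0 => /eqP ->.
by move=> ->; rewrite subrr mulr0.
Qed.

Lemma Tfz i S v v' : nu i = 0 -> Tf i S v = Tf i S v'.
Proof. by move=> h; rewrite /Tf h !mul0r. Qed.

Lemma sum_ff S : (1 < n)%N ->
  \sum_(i < n) ff i S = S + (\sum_(i < n) aa i * (1 - rho i) - S * \sum_(i < n) aa i) / n%:R.
Proof.
move=> hn.
have hn0 : (n%:R : R) != 0 by rewrite pnatr_eq0 -lt0n; case: n hn.
rewrite /ff -mulr_suml big_split /= sumr_const card_ord.
have -> : \sum_(i < n) aa i * (1 - S - rho i) =
   \sum_(i < n) aa i * (1 - rho i) - S * \sum_(i < n) aa i.
  rewrite mulr_sumr -sumrB; apply: eq_bigr => i _; ring.
rewrite -mulr_natr; field.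
by rewrite hn0.
Qed.

End Aux.

Theorem lemma10p4 (R : realType) (n : nat) (beta nu rho : 'I_n -> R) :
  (2 <= n)%N ->
  (forall i, 0 < beta i) ->
  (forall i, 0 <= nu i <= 1) ->
  (forall i, 0 <= rho i <= 1) ->
  ~ (forall i, nu i = 1) ->
  ~ (forall i, nu i = 0) ->
  ~ (forall i, rho i = 1) ->
  ~ (forall i, rho i = 0) ->
  ((#|[set i | nu i == 0%R]| <= 1)%N -> unique_interior_equilibrium beta nu rho) /\
  (unique_interior_equilibrium beta nu rho -> (#|[set i | nu i == 0%R]| <= 1)%N).
Proof.
move=> hn hb hnu hrho hnu1 hnu0 _ _.
have eqE : forall x y, interior_equilibrium beta nu rho x y <->
    x = 1 - \sum_(j < n) y j /\ forall i, Tf nu rho i (\sum_(j < n) y j) (y i) = 0.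
  move=> x y; split.
    move=> [[_ h] hx]; split => // i; move: (h i); rewrite hx rhs_yE.
    by move/eqP; rewrite mulf_eq0 gt_eqF //= => /eqP.
  move=> [hx h]; split => //; split.
    by rewrite /rhs_x hx; ring.
  by move=> i; rewrite hx rhs_yE h mulr0.
split; last first.
  move=> [[x [y hxy]] huniq]; rewrite leqNgt; apply/negP => /card_gt1P [a [b []]].
  rewrite !inE => /eqP ha /eqP hb' hab.
  pose y' := fun j => y j + (j == a)%:R - (j == b)%:R.
  have hs : \sum_(j < n) y' j = \sum_(j < n) y j.
    rewrite /y' sumrB big_split /=.
    have h1 : forall c : 'I_n, \sum_(j < n) ((j == c)%:R : R) = 1.
      by move=> c; rewrite (bigD1 c) //= eqxx big1 ?addr0 // => j /negbTE ->.
    by rewrite !h1 addrK.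
  have : interior_equilibrium beta nu rho x y'.
    move/eqE: hxy => [hx h]; apply/eqE; rewrite hs; split => // i.
    case: (eqVneq i a) => [->|hia]; first by rewrite (@Tfz _ _ nu rho a _ _ (y a) ha); exact: h.
    case: (eqVneq i b) => [->|hib]; first by rewrite (@Tfz _ _ nu rho b _ _ (y b) hb'); exact: h.
    by rewrite /y' (negbTE hia) (negbTE hib) subr0 addr0.
  move=> h'; have [_ /(_ a)] := huniq _ _ _ _ hxy h'.
  rewrite /y' eqxx (negbTE hab) subr0 => /eqP.
  by rewrite -subr_eq0 opprD addrA subrr sub0r oppr_eq0 oner_eq0.
move=> hcard.
have nzo : forall i j, nu i = 0 -> nu j = 0 -> i = j.
  move/card_le1_eqP: hcard => h i j hi hj.
  by have := h i j; rewrite !inE hi hj eqxx => /(_ isT isT) ->.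
case: (boolP [exists k, nu k == 0]) => [/existsP [k /eqP hk]|/existsPn hz].
- have nzk : forall i, i != k -> nu i != 0.
    by move=> i hik; apply/eqP => hi; move/eqP: hik; apply; apply: nzo.
  pose S0 := 1 - rho k.
  pose y := fun i => if i == k then S0 - \sum_(j < n | j != k) ff nu rho j S0
                     else ff nu rho i S0.
  have hsum : \sum_(j < n) y j = S0.
    rewrite (bigD1 k) //= /y eqxx.
    under eq_bigr => j /negbTE -> do [].
    by rewrite subrK.
  split.
    exists (1 - S0), y; apply/eqE; rewrite hsum; split => // i.
    case: (eqVneq i k) => [->|hik].
      by rewrite /Tf hk subr0 !mul0r mul1r addr0 /S0; ring.
    by apply/(@Tf0 _ _ nu rho _ _ _ hn (nzk _ hik)); rewrite /y (negbTE hik).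
  move=> x1 y1 x2 y2 /eqE [hx1 h1] /eqE [hx2 h2].
  have hS : forall yy : 'I_n -> R, (forall i, Tf nu rho i (\sum_(j < n) yy j) (yy i) = 0) ->
      \sum_(j < n) yy j = S0.
    move=> yy h; move: (h k); rewrite /Tf hk subr0 !mul0r mul1r addr0 /S0 => hh; lra.
  have hS1 := hS _ h1; have hS2 := hS _ h2.
  have hne : forall i, i != k -> y1 i = y2 i.
    move=> i hik.
    move: (h1 i) (h2 i); rewrite hS1 hS2 => /(@Tf0 _ _ nu rho _ _ _ hn (nzk _ hik)) ->.
    by move/(@Tf0 _ _ nu rho _ _ _ hn (nzk _ hik)) ->.
  split; first by rewrite hx1 hx2 hS1 hS2.
  move=> i; case: (eqVneq i k) => [->|hik]; last exact: hne.
  have e1 := hS1; have e2 := hS2.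
  rewrite (bigD1 k) //= in e1; rewrite (bigD1 k) //= in e2.
  have : \sum_(j < n | j != k) y1 j = \sum_(j < n | j != k) y2 j.
    by apply: eq_bigr => j; apply: hne.
  move=> hrest; rewrite -hrest in e2; lra.
- have nz : forall i, nu i != 0 by move=> i; exact: hz.
  have [k hk1] : exists k, nu k != 1.
    case: (boolP [exists k, nu k != 1]) => [/existsP [k hk]|/existsPn h]; first by exists k.
    by exfalso; apply: hnu1 => i; apply/eqP; move: (h i); rewrite negbK.
  have hc : 0 < cc R n by rewrite /cc ltr0n; move: hn; case: (n) => [|[|m]].
  have aa_ge0 : forall i, 0 <= aa nu i.
    move=> i; rewrite /aa; have /andP [h0 h1] := hnu i.
    apply: divr_ge0; last by [].
    by apply: mulr_ge0; [exact: ltW | rewrite subr_ge0].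
  have hA : 0 < \sum_(i < n) aa nu i.
    rewrite (bigD1 k) //=; apply: ltr_wpDr; first by apply: sumr_ge0 => i _.
    rewrite /aa; have /andP [h0 h1] := hnu k.
    have hpos : 0 < nu k by rewrite lt_def nz.
    apply: divr_gt0 => //; apply: mulr_gt0 => //.
    by rewrite subr_gt0 lt_def eq_sym hk1.
  pose S0 := (\sum_(i < n) aa nu i * (1 - rho i)) / \sum_(i < n) aa nu i.
  have hSfix : forall S, \sum_(i < n) ff nu rho i S = S <-> S = S0.
    move=> S; rewrite sum_ff //.
    have hn0 : (n%:R : R) != 0 by rewrite pnatr_eq0 -lt0n; move: hn; case: (n).
    have hA0 : \sum_(i < n) aa nu i != 0 by rewrite gt_eqF.
    rewrite /S0; set P := \sum_(i < n) _ * _; set A := \sum_(i < n) aa nu i.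
    split.
      move=> h.
      have h2 : (P - S * A) / n%:R = 0 by lra.
      move/eqP: h2; rewrite mulf_eq0 invr_eq0 (negbTE hn0) orbF subr_eq0 => /eqP ->.
      field; by rewrite hA0.
    move=> ->.
    have -> : P - P / A * A = 0 by field; rewrite hA0.
    by rewrite mul0r addr0.
  split.
    exists (1 - S0), (fun i => ff nu rho i S0).
    have hs : \sum_(j < n) ff nu rho j S0 = S0 by apply/hSfix.
    apply/eqE; rewrite hs; split => // i.
    by apply/(@Tf0 _ _ nu rho _ _ _ hn (nz i)).
  have hsol : forall x y, interior_equilibrium beta nu rho x y ->
      x = 1 - S0 /\ forall i, y i = ff nu rho i S0.
    move=> x y /eqE [hx h].
    have hy : forall i, y i = ff nu rho i (\sum_(j < n) y j).
      by move=> i; apply/(@Tf0 _ _ nu rho _ _ _ hn (nz i)).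
    have hS : \sum_(j < n) y j = S0.
      apply/hSfix; apply: esym; exact: (eq_bigr _ (fun i _ => hy i)).
    by split; [rewrite hx hS | move=> i; rewrite hy hS].
  move=> x1 y1 x2 y2 /hsol [-> h1] /hsol [-> h2]; split => // i.
  by rewrite h1 h2.
Qed.
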